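(* Let $x,v$ be positive integers with $xv\ge2$. Let $\lambda=(x,\dots,x)$ with $x$ occurring $v$ times and $\lambda'=(v,\dots,v)$ with $v$ occurring $x$ times. Then the posets $P(\lambda)$ and $P(\lambda')$ are isomorphic.
   Context: For a vector $\mu=(\mu_1,\dots,\mu_d)$ of positive integers with sum $n\ge2$, $\Delta_\mu=\mathrm{conv}(e_1,\dots,e_d,\mu)\subset\mathbb{R}^d$ has fundamental parallelepiped $\Pi_\mu=\{\sum_{i=1}^d\gamma_i(1,e_i)+\gamma_{d+1}(1,\mu):0\le\gamma_i<1\}\subset\mathbb{R}^{d+1}$. $P(\mu)$ is the set $\Pi_\mu\cap\mathbb{Z}^{d+1}$ ordered by $\sigma\preceq\tau$ iff $\tau-\sigma\in\Pi_\mu\cap\mathbb{Z}^{d+1}$. *)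

(* Defs.v *)
From mathcomp Require Import all_boot all_order all_algebra.
Unset Strict Implicit. Unset Printing Implicit Defensive.
Import Order.TTheory GRing.Theory Num.Theory.
Local Open Scope ring_scope.

(* mu = (mu_1,...,mu_d) is a seq nat with d = size mu.  Points of Z^{d+1} are
   row vectors 'rV[int]_(d.+1); coordinate 0 is the leading "1" coordinate,
   coordinate k (1 <= k <= d) is the k-th coordinate of R^d. *)

(* gen mu j k : k-th coordinate of the j-th generator of Pi_mu,
   generator j (j < d) is (1, e_{j+1}); generator d is (1, mu). *)
Definition gen (mu : seq nat) (j k : nat) : rat :=
  if k == 0%N then 1
  else if (j < size mu)%N then ((j.+1 == k) : nat)%:R
  else (nth 0%N mu k.-1)%:R.

Definition inPi (mu : seq nat) (p : 'rV[int]_(size mu).+1) : Prop :=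
  exists gam : 'I_(size mu).+1 -> rat,
    (forall j, 0 <= gam j /\ gam j < 1) /\
    forall k : 'I_(size mu).+1,
      (p ord0 k)%:~R = \sum_(j < (size mu).+1) gam j * gen mu j k.

Definition Pset (mu : seq nat) (p : 'rV[int]_(size mu).+1) : Prop := inPi mu p.

Definition Ple (mu : seq nat) (s t : 'rV[int]_(size mu).+1) : Prop :=
  inPi mu (t - s).

Definition poset_iso {T U : Type} (A : T -> Prop) (leA : T -> T -> Prop)
  (B : U -> Prop) (leB : U -> U -> Prop) : Prop :=
  exists (f : T -> U) (g : U -> T),
    (forall a, A a -> B (f a)) /\ (forall b, B b -> A (g b)) /\
    (forall a, A a -> g (f a) = a) /\ (forall b, B b -> f (g b) = b) /\
    (forall a1 a2, A a1 -> A a2 -> (leA a1 a2 <-> leB (f a1) (f a2))).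

Definition Piso (mu nu : seq nat) : Prop :=
  poset_iso (Pset mu) (@Ple mu) (Pset nu) (@Ple nu).

(* Main.v *)
Require Import Defs.
From mathcomp Require Import all_boot all_order all_algebra.
From mathcomp Require Import ring lra zify.
Import GRing.Theory Num.Theory.
Local Open Scope ring_scope.

Definition Nz (d a : nat) : int := (d * a)%N%:Z - 1.

Definition good (mu : seq nat) (a : nat) (p : 'rV[int]_(size mu).+1) : Prop :=
  exists J c : int, [/\ 0 <= J < Nz (size mu) a,
     0 <= c * Nz (size mu) a - J * a%:Z < Nz (size mu) a,
     p ord0 ord0 = (size mu)%:Z * c - J & forall j : 'I_(size mu), p ord0 (lift ord0 j) = c].

Lemma gen0 mu j : gen mu j 0 = 1. Proof. by []. Qed.

Lemma char_fwd (mu : seq nat) (a : nat) (p : 'rV[int]_(size mu).+1) :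
  (forall i, (i < size mu)%N -> nth 0%N mu i = a) -> (0 < size mu)%N -> (2 <= size mu * a)%N ->
  inPi mu p -> good mu a p.
Proof.
move=> hnth hd hda [gam [hb heq]].
set d := size mu in p gam hb heq hd hda *.
set t := gam ord_max.
have hk : forall j : 'I_d, (p ord0 (lift ord0 j))%:~R = gam (widen_ord (leqnSn d) j) + t * a%:R.
  move=> j; rewrite heq big_ord_recr /=.
  rewrite /gen /= ltnn. idtac.
  rewrite (bigD1 j) //= ltn_ord eqxx mulr1 big1 ?addr0 ?add0n ?hnth //.
  move=> i hij; rewrite ltn_ord eqSS.
  have -> : (i == j :> nat) = false by apply/negbTE.
  by rewrite mulr0.
have hk0 : (p ord0 ord0)%:~R = \sum_(i < d) gam (widen_ord (leqnSn d) i) + t.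
  by rewrite heq big_ord_recr /= mulr1; congr (_ + _); apply: eq_bigr => k _; rewrite mulr1.
pose j0 : 'I_d := Ordinal hd.
set c := p ord0 (lift ord0 j0).
have hall : forall j, p ord0 (lift ord0 j) = c.
  move=> j; apply/eqP; rewrite -subr_eq0; apply/eqP.
  have h1 : ((p ord0 (lift ord0 j) - c)%:~R : rat) = gam (widen_ord (leqnSn d) j) - gam (widen_ord (leqnSn d) j0).
    by rewrite intrB hk hk; ring.
  have [a1 a2] := hb (widen_ord (leqnSn d) j).
  have [b1 b2] := hb (widen_ord (leqnSn d) j0).
  have l1 : ((p ord0 (lift ord0 j) - c)%:~R : rat) < 1%:~R by rewrite h1; lra.
  have l2 : (-1)%:~R < ((p ord0 (lift ord0 j) - c)%:~R : rat) by rewrite h1; lra.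
  rewrite ltr_int in l1; rewrite ltr_int in l2; lia.
have hg : forall j : 'I_d, gam (widen_ord (leqnSn d) j) = c%:~R - t * a%:R.
  by move=> j; rewrite -(hall j) hk; ring.
have hk0' : (p ord0 ord0)%:~R = d%:R * (c%:~R - t * a%:R) + t.
  rewrite hk0 (eq_bigr (fun _ => c%:~R - t * a%:R)) //.
  by rewrite sumr_const card_ord mulr_natl.
exists (d%:Z * c - p ord0 ord0), c.
have hN : (Nz d a)%:~R = d%:R * a%:R - 1 :> rat.
  by rewrite /Nz intrB -natrM.
have hJ : ((d%:Z * c - p ord0 ord0)%:~R : rat) = t * (Nz d a)%:~R.
  by rewrite intrB intrM hk0' hN; ring.
have hC : ((c * Nz d a - (d%:Z * c - p ord0 ord0) * a%:Z)%:~R : rat) = gam (widen_ord (leqnSn d) j0) * (Nz d a)%:~R.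
  by rewrite intrB !intrM hJ hg; ring.
have hNpos : 1 <= (Nz d a)%:~R :> rat.
  rewrite hN. have : (2%:R <= (d * a)%N%:R :> rat) by rewrite ler_nat. rewrite natrM. lra.
have [t1 t2] := hb ord_max; rewrite -/t in t1 t2.
have [g1 g2] := hb (widen_ord (leqnSn d) j0).
split => //.
- apply/andP; split.
  + rewrite -(ler0z rat) hJ; nra.
  + rewrite -(ltr_int rat) hJ; nra.
- apply/andP; split.
  + rewrite -(ler0z rat) hC; nra.
  + rewrite -(ltr_int rat) hC; nra.
- ring.
Qed.


Lemma char_bwd (mu : seq nat) (a : nat) (p : 'rV[int]_(size mu).+1) :
  (forall i, (i < size mu)%N -> nth 0%N mu i = a) -> (0 < size mu)%N -> (2 <= size mu * a)%N ->
  good mu a p -> inPi mu p.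
Proof.
move=> hnth hd hda [J [c [/andP[J1 J2] /andP[C1 C2] h0 hl]]].
set d := size mu in p hd hda J2 C1 C2 h0 hl *.
have hN : (Nz d a)%:~R = d%:R * a%:R - 1 :> rat by rewrite /Nz intrB -natrM.
have hNpos : 1 <= (Nz d a)%:~R :> rat.
  rewrite hN. have : (2%:R <= (d * a)%N%:R :> rat) by rewrite ler_nat. rewrite natrM. lra.
have hNq : 0 < (Nz d a)%:~R :> rat by lra.
have hN0 : (Nz d a)%:~R != 0 :> rat by rewrite Order.POrderTheory.gt_eqF.
set t : rat := J%:~R / (Nz d a)%:~R.
have hJt : J%:~R = t * (Nz d a)%:~R by rewrite /t mulfVK.
have e1 : c%:~R - t * a%:R = (c * Nz d a - J * a%:Z)%:~R / (Nz d a)%:~R.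
  by rewrite intrB !intrM /t; field.
pose g := fun j : 'I_d.+1 => if (j < d)%N then c%:~R - t * a%:R else t.
have hg1 : forall j : 'I_d, g (widen_ord (leqnSn d) j) = c%:~R - t * a%:R.
  by move=> j; rewrite /g /= ltn_ord.
have hg2 : g ord_max = t by rewrite /g ltnn.
have hgb : forall j, 0 <= g j /\ g j < 1.
  move=> j; rewrite /g; case: ifP => _.
  + rewrite e1; split; first by apply: divr_ge0; [rewrite ler0z | exact: Order.POrderTheory.ltW].
    by rewrite ltr_pdivrMr // mul1r ltr_int.
  + split; first by apply: divr_ge0; [rewrite ler0z | exact: Order.POrderTheory.ltW].
    by rewrite /t ltr_pdivrMr // mul1r ltr_int.
clearbody g t.
exists g; split => //.
move=> k; case: (unliftP ord0 k) => [j ->|->].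
- rewrite hl big_ord_recr hg2 /gen /= ltnn.
  rewrite (bigD1 j) //= ltn_ord eqxx mulr1 big1 ?addr0 ?add0n ?hnth // ?hg1; first ring.
  move=> i hij; rewrite ltn_ord eqSS.
  have -> : (i == j :> nat) = false by apply/negbTE.
  by rewrite mulr0.
- rewrite h0 big_ord_recr hg2 /gen /= mulr1.
  rewrite (eq_bigr (fun _ => c%:~R - t * a%:R)); last by move=> i _; rewrite mulr1 hg1.
  rewrite sumr_const card_ord -mulr_natl intrB intrM hJt hN.
  have -> : (d%:Z)%:~R = d%:R :> rat by [].
  ring.
Qed.


Definition F (mu nu : seq nat) (p : 'rV[int]_(size mu).+1) : 'rV[int]_(size nu).+1 :=
  \row_(k < (size nu).+1) (if k == ord0 then p ord0 (inord 1) else p ord0 ord0).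

Lemma inord1 {mu : seq nat} (hd : (0 < size mu)%N) :
  (inord 1 : 'I_(size mu).+1) = lift ord0 (Ordinal hd).
Proof. by apply: val_inj; rewrite /= inordK. Qed.

Lemma good_const mu a (p : 'rV[int]_(size mu).+1) : (0 < size mu)%N -> good mu a p ->
  forall j, p ord0 (lift ord0 j) = p ord0 (inord 1).
Proof.
move=> hd [J [c [_ _ _ hl]]] j; by rewrite (inord1 hd) !hl.
Qed.

Lemma transfer mu nu a (p : 'rV[int]_(size mu).+1) : size nu = a -> (0 < size mu)%N -> good mu a p ->
  good nu (size mu) (F mu nu p).
Proof.
move=> hnu hd [J [c [/andP[J1 J2] /andP[C1 C2] h0 hl]]].
have eN : Nz (size nu) (size mu) = Nz (size mu) a by rewrite /Nz hnu mulnC.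
have eNz : Nz (size mu) a = (size mu)%:Z * a%:Z - 1 by rewrite /Nz PoszM.
have ea : (size nu)%:Z = a%:Z by rewrite hnu.
exists (Nz (size mu) a * c - a%:Z * J), ((size mu)%:Z * c - J).
rewrite eN; split.
- have -> : Nz (size mu) a * c - a%:Z * J = c * Nz (size mu) a - J * a%:Z by ring.
  by rewrite C1 C2.
- have -> : ((size mu)%:Z * c - J) * Nz (size mu) a - (Nz (size mu) a * c - a%:Z * J) * (size mu)%:Z = J.
    by rewrite eNz; ring.
  by rewrite J1 J2.
- rewrite mxE eqxx (inord1 hd) hl ea eNz; ring.
- by move=> j; rewrite mxE /= h0.
Qed.

Lemma FF mu nu (p : 'rV[int]_(size mu).+1) : (0 < size mu)%N -> (0 < size nu)%N ->
  (forall j, p ord0 (lift ord0 j) = p ord0 (inord 1)) -> F nu mu (F mu nu p) = p.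
Proof.
move=> hd hn hc; apply/rowP => k; rewrite !mxE.
have h1 : ((inord 1 : 'I_(size nu).+1) == ord0) = false by rewrite (inord1 hn).
case: (unliftP ord0 k) => [j ->|->] /=.
- by rewrite hc.
- by rewrite h1.
Qed.

Lemma FB mu nu (s t : 'rV[int]_(size mu).+1) : F mu nu (t - s) = F mu nu t - F mu nu s.
Proof. by apply/rowP => k; rewrite !mxE; case: ifP. Qed.


Arguments good_const {mu a p}.
Arguments FF {mu nu p}.
Lemma Pset_good {x v : nat} (hx : (0 < x)%N) (hv : (0 < v)%N) (hxv : (2 <= x * v)%N) p :
  inPi (nseq v x) p <-> good (nseq v x) x p.
Proof.
have h1 : forall i, (i < size (nseq v x))%N -> nth 0%N (nseq v x) i = x.
  by move=> i; rewrite size_nseq => hi; rewrite nth_nseq hi.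
have h2 : (0 < size (nseq v x))%N by rewrite size_nseq.
have h3 : (2 <= size (nseq v x) * x)%N by rewrite size_nseq mulnC.
split; [exact: char_fwd | exact: char_bwd].
Qed.

Lemma transfer' (x v : nat) p : (0 < x)%N -> (0 < v)%N ->
  good (nseq v x) x p -> good (nseq x v) v (F (nseq v x) (nseq x v) p).
Proof.
move=> hx hv h.
have := @transfer (nseq v x) (nseq x v) x p (size_nseq _ _).
by rewrite size_nseq; apply => //; rewrite size_nseq.
Qed.


Theorem corollary4p2 (x v : nat) (hx : (0 < x)%N) (hv : (0 < v)%N)
  (hxv : (2 <= x * v)%N) :
  Piso (nseq v x) (nseq x v).
Proof.
have hvx : (2 <= v * x)%N by rewrite mulnC.
have sA : (0 < size (nseq v x))%N by rewrite size_nseq.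
have sB : (0 < size (nseq x v))%N by rewrite size_nseq.
exists (F (nseq v x) (nseq x v)), (F (nseq x v) (nseq v x)).
rewrite /Pset /Ple.
split; [|split; [|split; [|split]]].
- move=> a /(Pset_good hx hv hxv) ha; apply/(Pset_good hv hx hvx).
  exact: transfer'.
- move=> a /(Pset_good hv hx hvx) ha; apply/(Pset_good hx hv hxv).
  exact: transfer'.
- move=> a /(Pset_good hx hv hxv) ha; apply: FF => //; exact: (good_const _ ha).
- move=> a /(Pset_good hv hx hvx) ha; apply: FF => //; exact: (good_const _ ha).
- move=> a1 a2 /(Pset_good hx hv hxv) h1 /(Pset_good hx hv hxv) h2.
  have hc : forall j, (a2 - a1) ord0 (lift ord0 j) = (a2 - a1) ord0 (inord 1).
    by move=> j; rewrite !mxE (good_const sA h1) (good_const sA h2).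
  rewrite -FB; split.
  + move/(Pset_good hx hv hxv) => h; apply/(Pset_good hv hx hvx); exact: transfer'.
  + move/(Pset_good hv hx hvx) => h; rewrite -(FF sA sB hc).
    apply/(Pset_good hx hv hxv); exact: transfer'.
Qed.
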